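(* For any probability distributions $\mathbf{p},\mathbf{q}$ on $G_\Delta$ and any $\sigma>0$, $\mathrm{TV}(\tilde H^\sigma_{\mathbf{p}},\tilde H^\sigma_{\mathbf{q}})\le\frac{\sqrt{\mathrm{EMD}(\mathbf{p},\mathbf{q})}}{2\sigma}$.
   Context: $G_\Delta=\{(i/\Delta,j/\Delta):i,j\in\{0,\dots,\Delta-1\}\}$, $\tilde G_\Delta=\{(i/\Delta,j/\Delta):i,j\in\mathbb{Z}\}$. $\tilde H^\sigma_{\mathbf{p}}(a)=\sum_{a'\in G_\Delta}\frac1Z e^{-\|a-a'\|_2^2/(2\sigma^2)}\mathbf{p}(a')$ for $a\in\tilde G_\Delta$, $Z=\sum_{d\in\tilde G_\Delta}e^{-\|d\|_2^2/(2\sigma^2)}$. $\mathrm{TV}(P,Q)=\frac12\sum_a|P(a)-Q(a)|$. $\mathrm{EMD}(\mathbf{p},\mathbf{q})=\min_\gamma\sum_{x,y}\gamma(x,y)\|x-y\|_1$ over nonnegative couplings with marginals $\mathbf{p},\mathbf{q}$. *)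

(* Defs.v *)
From mathcomp Require Import all_boot all_order all_algebra.
From mathcomp Require Import all_classical all_reals all_analysis.
Set Implicit Arguments. Unset Strict Implicit. Unset Printing Implicit Defensive.
Import Order.TTheory GRing.Theory Num.Theory.
Local Open Scope classical_set_scope.
Local Open Scope ring_scope.

(* Grid G_Delta indexed by ('I_D * 'I_D): (i,j) <-> (i/D, j/D).
   Infinite lattice tilde G_Delta indexed by (int * int): (i,j) <-> (i/D, j/D). *)
Definition grid (D : nat) := ('I_D * 'I_D)%type.

Section Defs.
Variable R : realType.

Definition is_distr (D : nat) (p : grid D -> R) : Prop :=
  (forall a, 0 <= p a) /\ \sum_(a : grid D) p a = 1.

Definition sqdist (D : nat) (a b : int * int) : R :=
  (((a.1 - b.1)%:~R / D%:R) ^+ 2 + ((a.2 - b.2)%:~R / D%:R) ^+ 2).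

Definition l1dist (D : nat) (a b : int * int) : R :=
  `|(a.1 - b.1)%:~R / D%:R| + `|(a.2 - b.2)%:~R / D%:R|.

Definition gridZ (D : nat) (a : grid D) : int * int :=
  ((nat_of_ord a.1)%:Z, (nat_of_ord a.2)%:Z).

Definition Znorm (D : nat) (sigma : R) : R :=
  fine (\esum_(d in [set: int * int])
          (expR (- sqdist D d (0, 0) / (2 * sigma ^+ 2)))%:E).

Definition Htilde (D : nat) (sigma : R) (p : grid D -> R) (a : int * int) : R :=
  \sum_(a' : grid D)
     (Znorm D sigma)^-1 * expR (- sqdist D a (gridZ a') / (2 * sigma ^+ 2)) * p a'.

Definition TV (P Q : int * int -> R) : \bar R :=
  (2^-1)%:E * \esum_(a in [set: int * int]) (`|P a - Q a|)%:E.

Definition is_coupling (D : nat) (p q : grid D -> R) (g : grid D * grid D -> R) :=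
  (forall xy, 0 <= g xy) /\
  (forall x, \sum_(y : grid D) g (x, y) = p x) /\
  (forall y, \sum_(x : grid D) g (x, y) = q y).

(* EMD = min over couplings (the minimum is attained; we use the infimum) *)
Definition EMD (D : nat) (p q : grid D -> R) : R :=
  inf [set c : R | exists g, is_coupling p q g /\
        c = \sum_(xy : grid D * grid D) g xy * l1dist D (gridZ xy.1) (gridZ xy.2)].

End Defs.

(* Main.v *)
Require Import Defs.
From mathcomp Require Import all_boot all_order all_algebra.
From mathcomp Require Import all_classical all_reals all_analysis.
From mathcomp Require Import lra ring.
Import Order.TTheory GRing.Theory Num.Theory.
Import numFieldNormedType.Exports.
Local Open Scope classical_set_scope.
Local Open Scope ring_scope.

Section Es.
Variable R : realType.

Lemma esumZ (T : choiceType) (k : R) (a : T -> R) : 0 <= k -> (forall i, 0 <= a i) ->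
  \esum_(i in [set: T]) (k * a i)%:E = (k%:E * \esum_(i in [set: T]) (a i)%:E)%E.
Proof.
move=> k0 a0; rewrite /esum -ereal_supZl //; last first.
  by apply/set0P; exists 0%E; exists set0; [exact: fsets_set0|rewrite fsbig_set0].
congr ereal_sup; apply/seteqP; split.
  move=> _ /= [X XS <-].
  exists (\sum_(i \in X) (a i)%:E)%E; first by exists X.
  by case: XS => fX _; rewrite !fsbig_finite // !sumEFin -EFinM mulr_sumr.
move=> _ /= [_ [X XS <-] <-].
case: XS => fX XS; exists X => //.
by rewrite !fsbig_finite // !sumEFin -EFinM mulr_sumr.
Qed.

Lemma esum_bij (T : choiceType) (e : T -> T) (h : T -> \bar R) : bijective e ->
  \esum_(i in [set: T]) h (e i) = \esum_(i in [set: T]) h i.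
Proof.
move=> be; by rewrite [RHS](reindex_esum [set: T] [set: T] e) ?setTT_bijective.
Qed.


Definition sh (x a : int * int) : int * int := (a.1 - x.1, a.2 - x.2)%R.
Definition refl (x a : int * int) : int * int := (x.1 + x.1 - a.1, x.2 + x.2 - a.2)%R.

Lemma sh_bij x : bijective (sh x).
Proof.
exists (fun a => (a.1 + x.1, a.2 + x.2)%R) => a; rewrite /sh /=.
  by rewrite !subrK; case: a.
by rewrite !addrK; case: a.
Qed.

Lemma refl_bij x : bijective (refl x).
Proof.
exists (refl x) => a; rewrite /refl /=; by rewrite !subKr; case: a.
Qed.

Lemma sqdist_sh (D : nat) x a : sqdist R D a x = sqdist R D (sh x a) (0, 0).
Proof. by rewrite /sqdist /sh /= !subr0. Qed.

Lemma sqdist_refl (D : nat) x a : sqdist R D (refl x a) x = sqdist R D a x.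
Proof. rewrite /sqdist /refl /= !rmorphB /= !rmorphD /=. ring. Qed.

Lemma sqdist_ge0 (D : nat) a b : 0 <= sqdist R D a b.
Proof. by rewrite /sqdist addr_ge0 // sqr_ge0. Qed.

Lemma sqdist_par (D : nat) x y a :
  sqdist R D a y + sqdist R D (refl x a) y = 2 * sqdist R D a x + 2 * sqdist R D x y.
Proof. rewrite /sqdist /refl /= !rmorphB /= !rmorphD /=. ring. Qed.


Lemma mvt0 (f df : R -> R) : (forall x : R, is_derive x (1:R) f (df x)) ->
  forall t, exists c, 0 <= c * t /\ f t - f 0 = df c * t.
Proof.
move=> hd t.
have cont : forall a b : R, {within `[a, b], continuous f}.
  move=> a b; apply: derivable_within_continuous => x _.
  by have := hd x => -[].
case: (leP 0 t) => ht.
  have [c /andP[c0 ct] e] := MVT_segment ht (fun x _ => hd x) (cont 0 t).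
  by exists c; split; [apply: mulr_ge0|rewrite e subr0].
have [c /andP[c0 ct] e] := MVT_segment (ltW ht) (fun x _ => hd x) (cont t 0).
exists c; split; first by apply: mulr_le0 => //; apply: ltW.
by rewrite -opprB e sub0r mulrN opprK.
Qed.

Let psi (t : R) := t * expR t - expR t + 1.
Let K (t : R) := (expR t + 1) * t - 2 * (expR t - 1).
Let G (t : R) := 2 * (expR t + 2) * psi t - 3 * (expR t - 1) ^+ 2.

Lemma psi_der (x : R) : is_derive x (1:R) psi (x * expR x).
Proof.
rewrite /psi.
have h1 : is_derive x (1:R) (fun t : R => t * expR t) (x * expR x + expR x).
  have H := @is_deriveM R R id expR x 1 1 (expR x) (is_derive_id _ _) (is_derive_expR _).
  apply: is_derive_eq H _.
  by rewrite /GRing.scale /= mulr1.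
have h2 := is_deriveD (is_deriveB h1 (is_derive_expR x)) (is_derive_cst (1:R) x 1).
apply: is_derive_eq h2 _.
by rewrite addr0 addrK.
Qed.


Lemma derM (f g : R -> R) (x a b : R) : is_derive x (1:R) f a -> is_derive x (1:R) g b ->
  is_derive x (1:R) (fun t => f t * g t) (a * g x + f x * b).
Proof.
move=> ha hb; have H := @is_deriveM R R f g x 1 a b ha hb.
apply: is_derive_eq H _; by rewrite /GRing.scale /= addrC mulrC.
Qed.
Lemma derD (f g : R -> R) (x a b : R) : is_derive x (1:R) f a -> is_derive x (1:R) g b ->
  is_derive x (1:R) (fun t => f t + g t) (a + b).
Proof. move=> ha hb; exact: (is_deriveD ha hb). Qed.
Lemma derB (f g : R -> R) (x a b : R) : is_derive x (1:R) f a -> is_derive x (1:R) g b ->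
  is_derive x (1:R) (fun t => f t - g t) (a - b).
Proof. move=> ha hb; exact: (is_deriveB ha hb). Qed.
Lemma derC (c x : R) : is_derive x (1:R) (fun _ => c) 0.
Proof. exact: is_derive_cst. Qed.
Lemma derI (x : R) : is_derive x (1:R) (fun t => t) 1.
Proof. exact: is_derive_id. Qed.
Lemma derE (x : R) : is_derive x (1:R) expR (expR x).
Proof. exact: is_derive_expR. Qed.

Arguments derM {f g x a b}.
Arguments derD {f g x a b}.
Arguments derB {f g x a b}.

Lemma K_der (x : R) : is_derive x (1:R) K (psi x).
Proof.
rewrite /K /psi.
have := derB (derM (derD (derE x) (derC 1 x)) (derI x)) (derM (derC 2 x) (derB (derE x) (derC 1 x))).
move=> H; apply: is_derive_eq H _.
rewrite subr0 addr0 mul0r add0r; lra.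
Qed.

Lemma G_der (x : R) : is_derive x (1:R) G (4 * expR x * K x).
Proof.
rewrite /G /K.
have hp : is_derive x (1:R) psi (x * expR x) by exact: psi_der.
have := derB (derM (derM (derC 2 x) (derD (derE x) (derC 2 x))) hp)
   (derM (derC 3 x) (derM (derB (derE x) (derC 1 x)) (derB (derE x) (derC 1 x)))).
move=> H; apply: is_derive_eq H _.
rewrite /psi !subr0 !addr0 !mul0r !add0r; lra.
Qed.


Lemma psi_ge0 (t : R) : 0 <= psi t.
Proof.
have [c [ct e]] := @mvt0 psi _ psi_der t.
have -> : psi t = c * expR c * t by rewrite -e /psi expR0 mul0r sub0r addNr subr0.
by rewrite mulrAC mulr_ge0// expR_ge0.
Qed.

Lemma K_sign (t : R) : 0 <= K t * t.
Proof.
have [c [ct e]] := @mvt0 K _ K_der t.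
have -> : K t = psi c * t by rewrite -e /K expR0 mulr0 subrr mulr0 subr0 subr0.
by rewrite -mulrA mulr_ge0 ?psi_ge0// -expr2 sqr_ge0.
Qed.

Lemma G_ge0 (t : R) : 0 <= G t.
Proof.
have [c [ct e]] := @mvt0 G _ G_der t.
have -> : G t = 4 * expR c * (K c * t).
  rewrite mulrA -e /G /psi expR0; ring.
apply: mulr_ge0; first by rewrite mulr_ge0// expR_ge0.
have := K_sign c; move: ct.
case: (eqVneq c 0) => [->|cn0]; first by rewrite /K expR0; lra.
move=> h1 h2.
have c2 : 0 < c * c by rewrite -expr2 exprn_even_gt0 // cn0 orbT.
have : 0 <= (K c * t) * (c * c) by nra.
by rewrite pmulr_lge0.
Qed.

Lemma pinsker_pt (t l : R) : 0 < l ->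
  `|expR t - 1| <= l * ((expR t + 2) / 3) + psi t / (2 * l).
Proof.
move=> l0.
have hG := G_ge0 t; rewrite /G in hG.
have hp := psi_ge0 t.
set u := expR t in hG *; set p := psi t in hG hp *.
have u0 : 0 < u by rewrite /u expR_gt0.
set m := p / (2 * l).
have hm : p = 2 * l * m by rewrite /m mulrC divfK // mulf_neq0 // gt_eqF.
have m0 : 0 <= m by rewrite /m divr_ge0 // mulr_ge0 // ltW.
rewrite hm in hG.
have a0 : 0 <= (u + 2) / 3 by rewrite divr_ge0 //; lra.
set a := (u + 2) / 3.
have ha : u + 2 = 3 * a by rewrite /a mulrC divfK.
rewrite ha in hG.
have key : (u - 1) ^+ 2 <= (l * a + m) ^+ 2.
  have h3 : (u - 1) ^+ 2 <= 4 * a * l * m by nra.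
  have h4 : 0 <= (l * a - m) ^+ 2 := sqr_ge0 _.
  nra.
have r0 : 0 <= l * a + m by rewrite addr_ge0 // mulr_ge0 // ltW.
by rewrite -ler_sqrt ?sqr_ge0 // !sqrtr_sqr (ger0_norm r0) in key.
Qed.


Section Pair.
Variables (D : nat) (sigma Z : R).
Hypothesis hs : 0 < sigma.
Hypothesis hZ : \esum_(d in [set: int * int])
   (expR (- sqdist R D d (0, 0) / (2 * sigma ^+ 2)))%:E = Z%:E.
Hypothesis Z0 : 0 < Z.

Definition g (x a : int * int) : R := Z^-1 * expR (- sqdist R D a x / (2 * sigma ^+ 2)).

Lemma g_ge0 x a : 0 <= g x a.
Proof. by rewrite /g mulr_ge0 ?invr_ge0 ?expR_ge0 // ltW. Qed.

Lemma mass x : \esum_(a in [set: int * int]) (g x a)%:E = 1%E.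
Proof.
rewrite /g esumZ; [|by rewrite invr_ge0 ltW|by move=> i; exact: expR_ge0].
under eq_esum do rewrite sqdist_sh.
rewrite (@esum_bij _ (sh x) (fun d => (expR (- sqdist R D d (0, 0) / (2 * sigma ^+ 2)))%:E)).
  by rewrite hZ -EFinM mulVf // ?gt_eqF.
exact: sh_bij.
Qed.

Lemma mass_refl x y : \esum_(a in [set: int * int]) (g y (refl x a))%:E = 1%E.
Proof.
rewrite (@esum_bij _ (refl x) (fun a => (g y a)%:E)); first exact: mass.
exact: refl_bij.
Qed.


Let s2 := 2 * sigma ^+ 2.
Let s2_gt0 : 0 < s2. Proof. by rewrite /s2 mulr_gt0 // exprn_gt0. Qed.
Let tt (x y a : int * int) := (sqdist R D a y - sqdist R D a x) / s2.
Let W (x y a : int * int) := g x a * tt x y a - g x a + g y a.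

Lemma gxE x y a : g x a = g y a * expR (tt x y a).
Proof.
rewrite /g /tt -mulrA -expRD; congr (_ * expR _).
rewrite /s2; field; by rewrite gt_eqF.
Qed.

Lemma W_ge0 x y a : 0 <= W x y a.
Proof.
have -> : W x y a = g y a * psi (tt x y a).
  by rewrite /W /psi (gxE x y a); ring.
by rewrite mulr_ge0 ?g_ge0 ?psi_ge0.
Qed.

Ltac posg := repeat first [ apply: adde_ge0 | rewrite lee_fin | apply: W_ge0 | apply: g_ge0
  | apply: sqdist_ge0 | apply: (ltW s2_gt0) | apply: ler0n | assumption | apply: mulr_ge0 | apply: divr_ge0 ].

Lemma Wsum x y : \esum_(a in [set: int * int]) (W x y a)%:E = (sqdist R D x y / s2)%:E.
Proof.
set c := sqdist R D x y / s2.
have c0 : 0 <= c by rewrite /c divr_ge0 ?sqdist_ge0 // ltW.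
have pt a : W x y a + W x y (refl x a) + 2 * g x a =
    2 * c * g x a + g y a + g y (refl x a).
  have e1 : g x (refl x a) = g x a by rewrite /g sqdist_refl.
  have e2 : tt x y a + tt x y (refl x a) = 2 * c.
    rewrite /tt /c sqdist_refl.
    have := sqdist_par D x y a. move=> h.
    rewrite -mulrDl mulrA; congr (_ / _); lra.
  rewrite /W e1.
  have -> : 2 * c * g x a = g x a * (tt x y a + tt x y (refl x a)) by rewrite e2; ring.
  ring.
have H : \esum_(a in [set: int * int]) ((W x y a)%:E + (W x y (refl x a))%:E + (2 * g x a)%:E)%E =
   \esum_(a in [set: int * int]) ((2 * c * g x a)%:E + (g y a)%:E + (g y (refl x a))%:E)%E.
  by apply: eq_esum => a _; rewrite -!EFinD pt.
do 4! (rewrite esumD in H; [|by move=> a _; posg|by move=> a _; posg]).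
rewrite (esumZ _ _ (g x)) in H; [|by rewrite ler0n|by move=> ?; apply: g_ge0].
rewrite (esumZ _ (2 * c) (g x)) in H; [|by rewrite mulr_ge0|by move=> ?; apply: g_ge0].
rewrite (mass_refl x y) (mass x) (mass y) in H.
rewrite (@esum_bij _ (refl x) (fun a => (W x y a)%:E)) in H; last exact: refl_bij.
move: H; have : (0 <= \esum_(a in [set: int * int]) (W x y a)%:E)%E.
  by apply: esum_ge0 => a _; posg.
case: (\esum_(a in [set: int * int]) (W x y a)%:E) => [r| |] //= _.
  rewrite !mule1 -!EFinD => h; have h' := EFin_inj h; congr (_%:E); lra.
Qed.


Lemma pair_lam x y l : 0 < l ->
  (\esum_(a in [set: int * int]) (`|g x a - g y a|)%:E <=
   (l + (sqdist R D x y / s2) / (2 * l))%:E)%E.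
Proof.
move=> l0.
have pt a : `|g x a - g y a| <=
    (l / 3) * g x a + (2 * l / 3) * g y a + (2 * l)^-1 * W x y a.
  have -> : (l / 3) * g x a + (2 * l / 3) * g y a + (2 * l)^-1 * W x y a =
      g y a * (l * ((expR (tt x y a) + 2) / 3) + psi (tt x y a) / (2 * l)).
    rewrite /W /psi (gxE x y a); field; by rewrite gt_eqF.
  rewrite (gxE x y a) -{2}[g y a]mulr1 -mulrBr normrM (ger0_norm (g_ge0 _ _)).
  by rewrite ler_wpM2l ?g_ge0 // pinsker_pt.
have cf : 0 <= l / 3 by rewrite divr_ge0 // ltW.
have cf2 : 0 <= 2 * l / 3 by rewrite divr_ge0 // mulr_ge0 // ltW.
have cf3 : 0 <= (2 * l)^-1 by rewrite invr_ge0 mulr_ge0 // ltW.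
apply: le_trans (_ : (\esum_(a in [set: int * int])
   (((l / 3) * g x a)%:E + ((2 * l / 3) * g y a)%:E + ((2 * l)^-1 * W x y a)%:E) <= _)%E).
  by apply: le_esum => a _; rewrite -!EFinD lee_fin pt.
rewrite esumD; [|by move=> a _; rewrite adde_ge0 // lee_fin mulr_ge0 ?g_ge0
                |by move=> a _; rewrite lee_fin mulr_ge0 ?W_ge0].
rewrite esumD; [|by move=> a _; rewrite lee_fin mulr_ge0 ?g_ge0
                |by move=> a _; rewrite lee_fin mulr_ge0 ?g_ge0].
rewrite (esumZ _ (l / 3) (g x)) //; last by move=> ?; apply: g_ge0.
rewrite (esumZ _ (2 * l / 3) (g y)) //; last by move=> ?; apply: g_ge0.
rewrite (esumZ _ ((2 * l)^-1) (W x y)) //; last by move=> ?; apply: W_ge0.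
rewrite (mass x) (mass y) (Wsum x y) !mule1 -!EFinM -!EFinD lee_fin.
rewrite le_eqVlt; apply/orP; left; apply/eqP; field; by rewrite !gt_eqF.
Qed.

Lemma pair_bound x y :
  (\esum_(a in [set: int * int]) (`|g x a - g y a|)%:E <=
   (Num.sqrt (sqdist R D x y) / sigma)%:E)%E.
Proof.
have := sqdist_ge0 D x y; rewrite le_eqVlt => /orP[/eqP q0|qp].
  rewrite -q0 sqrtr0 mul0r; apply/lee_addgt0Pr => e e0.
  have H := @pair_lam x y _ e0.
  apply: (le_trans H).
  by rewrite -q0 !mul0r addr0 add0e.
set q := sqdist R D x y in qp *.
set r := Num.sqrt q.
have r0 : 0 < r by rewrite /r sqrtr_gt0.
have hq : q = r ^+ 2 by rewrite /r sqr_sqrtr // ltW.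
have l0 : 0 < r / sigma / 2 by rewrite !divr_gt0.
apply: le_trans (@pair_lam x y _ l0) _.
rewrite lee_fin le_eqVlt; apply/orP; left; apply/eqP.
rewrite /s2 -/q hq; field; by rewrite !gt_eqF.
Qed.

End Pair.

Lemma coord_le1 (D : nat) (i j : 'I_D) :
  `|((i : int) - (j : int))%:~R / (D%:R : R)| <= 1.
Proof.
have D0 : (0 < D)%N by apply: leq_ltn_trans (leq0n i) (ltn_ord i).
have hi : (i%:R : R) < D%:R by rewrite ltr_nat ltn_ord.
have hj : (j%:R : R) < D%:R by rewrite ltr_nat ltn_ord.
have hD : (0 : R) < D%:R by rewrite ltr0n.
rewrite normrM normfV (ger0_norm (ltW hD)) ler_pdivrMr // mul1r.
rewrite rmorphB /= -!pmulrn.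
have i0 : (0 : R) <= i%:R by apply: ler0n.
have j0 : (0 : R) <= j%:R by apply: ler0n.
rewrite ler_norml; apply/andP; split; lra.
Qed.

Lemma sq_le_abs (u : R) : `|u| <= 1 -> u ^+ 2 <= `|u|.
Proof.
move=> h; rewrite -[u ^+ 2]ger0_norm ?sqr_ge0 // normrX.
have h0 := normr_ge0 u; nra.
Qed.

Lemma sq_le_l1 (D : nat) (i j : grid D) :
  sqdist R D (gridZ i) (gridZ j) <= l1dist R D (gridZ i) (gridZ j).
Proof.
rewrite /sqdist /l1dist /=.
by apply: lerD; apply: sq_le_abs; apply: coord_le1.
Qed.

Lemma l1_ge0 (D : nat) a b : 0 <= l1dist R D a b.
Proof. by rewrite /l1dist addr_ge0. Qed.

Lemma jensen_sqrt (I : finType) (w s l : I -> R) :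
  (forall i, 0 <= w i) -> \sum_i w i = 1 ->
  (forall i, 0 <= s i) -> (forall i, s i <= l i) ->
  \sum_i w i * Num.sqrt (s i) <= Num.sqrt (\sum_i w i * l i).
Proof.
move=> w0 w1 s0 sl.
have l0 i : 0 <= l i by apply: le_trans (s0 i) (sl i).
apply: (@le_trans _ _ (\sum_i w i * Num.sqrt (l i))).
  by apply: ler_sum => i _; rewrite ler_wpM2l // ler_wsqrtr.
have C0 : 0 <= \sum_i w i * l i by apply: sumr_ge0 => i _; rewrite mulr_ge0.
move: C0; rewrite le_eqVlt => /orP[/eqP C0|Cp].
  have h := psumr_eq0P (fun i _ => mulr_ge0 (w0 i) (l0 i)) (esym C0).
  rewrite -C0 sqrtr0 big1 // => i _.
  have := h i isT; move/eqP; rewrite mulf_eq0 => /orP[/eqP ->|/eqP ->].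
    by rewrite mul0r.
  by rewrite sqrtr0 mulr0.
set C := \sum_i w i * l i in Cp *.
set m := Num.sqrt C.
have m0 : 0 < m by rewrite /m sqrtr_gt0.
have hm : m ^+ 2 = C by rewrite /m sqr_sqrtr // ltW.
apply: (@le_trans _ _ (\sum_i w i * ((l i / m + m) / 2))).
  apply: ler_sum => i _; apply: ler_wpM2l => //.
  have hl : Num.sqrt (l i) ^+ 2 = l i by rewrite sqr_sqrtr.
  have hs0 : 0 <= Num.sqrt (l i) by apply: sqrtr_ge0.
  rewrite ler_pdivlMr // -(ler_pM2r m0) mulrDl divfK ?gt_eqF //.
  set r := Num.sqrt (l i) in hl hs0 *; rewrite -hl; have := sqr_ge0 (r - m); nra.
have -> : \sum_i w i * ((l i / m + m) / 2) = (C / m + m) / 2.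
  rewrite -[C]/(\sum_i w i * l i).
  rewrite (eq_bigr (fun i => (w i * l i) * (m^-1 / 2) + w i * (m / 2))); last first.
    by move=> i _; rewrite /=; field; rewrite gt_eqF.
  rewrite big_split /= -!mulr_suml w1; field; by rewrite gt_eqF.
rewrite -hm le_eqVlt; apply/orP; left; apply/eqP; field; by rewrite gt_eqF.
Qed.

End Es.

Section Main.
Variables (R : realType) (D : nat) (sigma Z : R).
Hypothesis hs : 0 < sigma.
Hypothesis hZ : \esum_(d in [set: int * int])
   (expR (- sqdist R D d (0, 0) / (2 * sigma ^+ 2)))%:E = Z%:E.
Hypothesis Z0 : 0 < Z.

Let Hg (p : grid D -> R) (a : int * int) : R :=
  \sum_(a' : grid D) Z^-1 * expR (- sqdist R D a (gridZ a') / (2 * sigma ^+ 2)) * p a'.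

Lemma coupling_bound (p q : grid D -> R) (gam : grid D * grid D -> R) :
  is_coupling p q gam -> \sum_x p x = 1 ->
  (\esum_(a in [set: int * int]) (`|Hg p a - Hg q a|)%:E <=
   (Num.sqrt (\sum_(xy : grid D * grid D) gam xy * l1dist R D (gridZ xy.1) (gridZ xy.2))
      / sigma)%:E)%E.
Proof.
move=> [g0 [gp gq]] p1.
have hdiff a : Hg p a - Hg q a = \sum_(xy : grid D * grid D)
    gam xy * (g R D sigma Z (gridZ xy.1) a - g R D sigma Z (gridZ xy.2) a).
  rewrite /Hg (eq_bigr (fun x => \sum_y gam (x, y) * g R D sigma Z (gridZ x) a)); last first.
    by move=> x _; rewrite -gp mulr_sumr; apply: eq_bigr => y _; rewrite mulrC.
  rewrite [X in _ - X](eq_bigr (fun y => \sum_x gam (x, y) * g R D sigma Z (gridZ y) a)); last first.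
    by move=> y _; rewrite -gq mulr_sumr; apply: eq_bigr => x _; rewrite mulrC.
  rewrite [X in _ - X]exchange_big /= !pair_bigA -sumrB.
  by apply: eq_bigr => -[x y] _ /=; rewrite mulrBr.
apply: (@le_trans _ _ (\esum_(a in [set: int * int]) (\sum_(xy : grid D * grid D)
    (gam xy * `|g R D sigma Z (gridZ xy.1) a - g R D sigma Z (gridZ xy.2) a|)%:E))).
  apply: le_esum => a _; rewrite sumEFin lee_fin hdiff.
  apply: le_trans (ler_norm_sum _ _ _) _; apply: ler_sum => xy _.
  by rewrite normrM (ger0_norm (g0 xy)).
rewrite esum_sum; last by move=> a xy _ _; rewrite lee_fin mulr_ge0.
apply: (@le_trans _ _ (\sum_(xy : grid D * grid D)
   (gam xy * (Num.sqrt (sqdist R D (gridZ xy.1) (gridZ xy.2)) / sigma))%:E)).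
  apply: lee_sum => xy _.
  rewrite (esumZ _ _ _ (fun a => `|g R D sigma Z (gridZ xy.1) a - g R D sigma Z (gridZ xy.2) a|)) //.
  rewrite EFinM; apply: lee_wpmul2l; first by rewrite lee_fin.
  exact: pair_bound.
rewrite sumEFin lee_fin.
rewrite (eq_bigr (fun xy => (gam xy * Num.sqrt (sqdist R D (gridZ xy.1) (gridZ xy.2))) / sigma));
  last by move=> xy _; rewrite mulrA.
rewrite -mulr_suml ler_pM2r ?invr_gt0 //.
apply: jensen_sqrt => //.
- rewrite (eq_bigr (fun xy => gam (xy.1, xy.2))); last by move=> -[].
  by rewrite -(pair_bigA _ (fun x y => gam (x, y))) /= -p1; apply: eq_bigr => x _; rewrite gp.
- by move=> xy; apply: sqdist_ge0.
- by move=> xy; apply: sq_le_l1.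
Qed.

End Main.

Theorem lemma10 (R : realType) (D : nat) (p q : grid D -> R) (sigma : R) :
  is_distr p -> is_distr q -> 0 < sigma ->
  (TV (Htilde sigma p) (Htilde sigma q) <=
     (Num.sqrt (EMD p q) / (2 * sigma))%:E)%E.
Proof.
move=> [p0 p1] [q0 q1] hs.
have bnd0 : 0 <= Num.sqrt (EMD p q) / (2 * sigma).
  by rewrite divr_ge0 ?sqrtr_ge0 // mulr_ge0 // ltW.
have Es0 : (0 <= \esum_(d in [set: int * int])
    (expR (- sqdist R D d (0, 0) / (2 * sigma ^+ 2)))%:E)%E.
  by apply: esum_ge0 => d _; rewrite lee_fin expR_ge0.
have Es1 : (1 <= \esum_(d in [set: int * int])
    (expR (- sqdist R D d (0, 0) / (2 * sigma ^+ 2)))%:E)%E.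
  apply: esum_ge; exists [set (0, 0)]; first by split; [exact: finite_set1|].
  rewrite fsbig_set1 /sqdist /= subrr mul0r expr0n /= addr0 oppr0 mul0r expR0.
  by [].
case HE : (\esum_(d in [set: int * int])
    (expR (- sqdist R D d (0, 0) / (2 * sigma ^+ 2)))%:E) Es0 Es1 => [Z| |] _ Z1; last first.
- by [].
- have ZnE : Znorm D sigma = 0 by rewrite /Znorm HE.
  rewrite /TV esum1 ?mule0 ?lee_fin // => a _.
  rewrite /Htilde ZnE invr0 !big1 ?subrr ?normr0 // => i _; by rewrite !mul0r.
have ZnE : Znorm D sigma = Z by rewrite /Znorm HE.
have Z0 : 0 < Z by move: Z1; rewrite lee_fin; apply: lt_le_trans.
rewrite /TV /Htilde ZnE.
set E := esum _ _.
have key c : [set c : R | exists g, is_coupling p q g /\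
        c = \sum_(xy : grid D * grid D) g xy * l1dist R D (gridZ xy.1) (gridZ xy.2)] c ->
    (E <= (Num.sqrt c / sigma)%:E)%E.
  move=> [gam [hc ->]]; exact: (@coupling_bound R D sigma Z hs HE Z0 p q gam hc p1).
have cp : is_coupling p q (fun xy => p xy.1 * q xy.2).
  split; first by move=> xy; rewrite mulr_ge0.
  split; first by move=> x /=; rewrite -mulr_sumr q1 mulr1.
  by move=> y /=; rewrite -mulr_suml p1 mul1r.
have E0 : (0 <= E)%E by apply: esum_ge0 => a _; rewrite lee_fin.
have := key _ (ex_intro _ _ (conj cp erefl)).
case HEE : E E0 => [e| |] // e0 _.
have le_all c : [set c : R | exists g, is_coupling p q g /\
        c = \sum_(xy : grid D * grid D) g xy * l1dist R D (gridZ xy.1) (gridZ xy.2)] c ->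
    (sigma * e) ^+ 2 <= c.
  move=> Sc; have := key c Sc; rewrite HEE lee_fin => h.
  have c0 : 0 <= c.
    case: Sc => gam [[g0 _] ->]; apply: sumr_ge0 => xy _.
    by rewrite mulr_ge0 // l1_ge0.
  have hsq : Num.sqrt c ^+ 2 = c by rewrite sqr_sqrtr.
  have se : sigma * e <= Num.sqrt c by rewrite mulrC -ler_pdivlMr.
  have se0 : 0 <= sigma * e by rewrite mulr_ge0 // ltW.
  rewrite -hsq; nra.
have hinf : (sigma * e) ^+ 2 <= EMD p q.
  apply: lb_le_inf; first by exists (\sum_(xy : grid D * grid D) p xy.1 * q xy.2 *
      l1dist R D (gridZ xy.1) (gridZ xy.2)); exists (fun xy => p xy.1 * q xy.2).
  by move=> c Sc; apply: le_all.
have hse : sigma * e <= Num.sqrt (EMD p q).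
  have := ler_wsqrtr hinf; rewrite sqrtr_sqr ger0_norm //.
  by rewrite mulr_ge0 // ltW.
rewrite -EFinM lee_fin ler_pdivlMr ?mulr_gt0 //.
have -> : 2^-1 * e * (2 * sigma) = sigma * e by field.
exact: hse.
Qed.
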